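(* Let $G$ be a digraph that is not strongly connected, and suppose $G$ has a strongly connected subdigraph $G'$ with at least one arc such that $G'$ is not a directed cycle. Then $d(L^kG)\to\infty$ as $k\to\infty$.
   Context: Digraphs are finite and may have loops and multiple arcs. The line digraph $LG$ has as vertex set the set of arcs of $G$, with an arc from $e$ to $f$ whenever the head of $e$ equals the tail of $f$; $L^0G=G$, $L^kG=L(L^{k-1}G)$. The inner diameter is $d(G)=\max\{\mathrm{dist}_G(u,v): \mathrm{dist}_G(u,v)<\infty\}$, where $\mathrm{dist}_G(u,v)$ is the length of a shortest directed walk from $u$ to $v$. A directed cycle is a digraph with vertices $v_0,\dots,v_{n-1}$ ($n\ge1$) and exactly the arcs $(v_i,v_{i+1\bmod n})$. *)

(* Defs.v *)
From Stdlib Require Import ClassicalEpsilon.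
From mathcomp Require Import all_boot.
Set Implicit Arguments. Unset Strict Implicit. Unset Printing Implicit Defensive.

Record digraph := Digraph {
  dvert : finType;
  darc : finType;
  tl : darc -> dvert;
  hd : darc -> dvert }.

Definition line_arc (G : digraph) : finType :=
  {p : darc G * darc G | hd p.1 == tl p.2}.

Definition line_digraph (G : digraph) : digraph :=
  @Digraph (darc G) (line_arc G)
    (fun p : line_arc G => (val p).1) (fun p : line_arc G => (val p).2).

Fixpoint iter_line (k : nat) (G : digraph) : digraph :=
  match k with 0 => G | k'.+1 => line_digraph (iter_line k' G) end.

Fixpoint walkn (G : digraph) (B : {set darc G}) (n : nat) (u v : dvert G) : bool :=
  match n with
  | 0 => u == v
  | n'.+1 => [exists a in B, (tl a == u) && walkn B n' (hd a) v]
  end.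

Definition reachable (G : digraph) (u v : dvert G) : Prop :=
  exists n, walkn [set: darc G] n u v.

(* dist_G(u,v): length of a shortest directed walk; (unused value 0 when
   v is unreachable from u: such pairs are excluded from the inner diameter
   and 0 does not affect a maximum over naturals). *)
Definition dist (G : digraph) (u v : dvert G) : nat :=
  match excluded_middle_informative (reachable u v) with
  | left H => ex_minn H
  | right _ => 0
  end.

Definition inner_diam (G : digraph) : nat :=
  \max_(u : dvert G) \max_(v : dvert G) dist u v.

Definition strongly_connected (G : digraph) : Prop :=
  forall u v : dvert G, reachable u v.

Definition is_subdigraph (G : digraph) (S : {set dvert G}) (B : {set darc G}) : Prop :=
  forall a, a \in B -> (tl a \in S) && (hd a \in S).

Definition sub_strongly_connected (G : digraph) (S : {set dvert G})
    (B : {set darc G}) : Prop :=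
  forall u v, u \in S -> v \in S -> exists n, walkn B n u v.

Definition sub_is_cycle (G : digraph) (S : {set dvert G}) (B : {set darc G}) : Prop :=
  exists n : nat, exists f : 'I_n.+1 -> dvert G, exists g : 'I_n.+1 -> darc G,
    [/\ injective f, injective g,
        S = [set f i | i in 'I_n.+1], B = [set g i | i in 'I_n.+1] &
        forall i : 'I_n.+1,
          tl (g i) = f i /\ hd (g i) = f (inord (i.+1 %% n.+1))].

(* Main.v *)
Require Import Defs.
From Stdlib Require Import ClassicalEpsilon.
From mathcomp Require Import all_boot.
Set Implicit Arguments. Unset Strict Implicit. Unset Printing Implicit Defensive.

Lemma walkn_mono (G : digraph) (B B' : {set darc G}) n u v :
  B \subset B' -> walkn B n u v -> walkn B' n u v.
Proof.
move=> sBB'; elim: n u => [|n IH] u //= /existsP [a /andP [aB /andP [tla w]]].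
apply/existsP; exists a; rewrite (subsetP sBB' a aB) tla /=; exact: IH.
Qed.

Lemma walkn_last (G : digraph) (B : {set darc G}) n u v :
  walkn B n.+1 u v -> exists2 g, g \in B & walkn B n u (tl g) && (hd g == v).
Proof.
elim: n u => [|n IH] u /= /existsP [a /andP [aB /andP [/eqP tla w]]].
  by exists a => //; rewrite tla eqxx.
have [g gB /andP [w1 hg]] := IH _ w.
exists g => //; rewrite hg andbT; apply/existsP; exists a; rewrite aB tla eqxx; exact: w1.
Qed.

Lemma lift_walk (H : digraph) n (e f : darc H) :
  walkn [set: darc H] n (hd e) (tl f) ->
  walkn [set: darc (line_digraph H)] n.+1 e f.
Proof.
elim: n e => [|n IH] e /=.
  move=> h; apply/existsP; exists (exist _ (e, f) h : line_arc H).
  by rewrite in_setT /= !eqxx.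
move=> /existsP [a /andP [_ /andP [/eqP ta w]]].
have h : hd e == tl a by rewrite ta.
apply/existsP; exists (exist _ (e, a) h : line_arc H).
rewrite in_setT /= eqxx /=; exact: IH.
Qed.

Lemma unlift_walk (H : digraph) n (e f : darc H) :
  walkn [set: darc (line_digraph H)] n.+1 e f ->
  walkn [set: darc H] n (hd e) (tl f).
Proof.
elim: n e => [|n IH] e /= /existsP [[[x y] /= hxy] /andP [_ /andP [/eqP tp w]]];
  simpl in tp; subst x.
  by move: w => /= /eqP <-.
apply/existsP; exists y; rewrite in_setT eq_sym hxy /=; exact: IH.
Qed.

Lemma dist_le (H : digraph) (u v : dvert H) n :
  walkn [set: darc H] n u v -> dist u v <= n.
Proof.
move=> w; rewrite /dist; case: excluded_middle_informative => [R|//].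
by case: ex_minnP => m _ /(_ n w).
Qed.

Lemma dist_walk (H : digraph) (u v : dvert H) :
  reachable u v -> walkn [set: darc H] (dist u v) u v.
Proof.
rewrite /dist; case: excluded_middle_informative => [R|//] _.
by case: ex_minnP.
Qed.

Lemma diam_ge (H : digraph) (u v : dvert H) : dist u v <= inner_diam H.
Proof.
rewrite /inner_diam; apply: leq_trans (leq_bigmax u).
exact: (leq_bigmax (F := fun v => dist u v) v).
Qed.

Definition Inv (j : nat) (H : digraph) : Prop :=
  exists (B F A : darc H -> Prop) (u v : dvert H),
  (forall e, B e -> exists g, B g /\ tl g = hd e) /\
  (forall e, F e -> B e /\ exists g, F g /\ hd g = tl e) /\
  (forall e, A e -> B e /\ ~ F e) /\
  (exists e, F e /\ hd e = u) /\
  (exists f, A f /\ tl f = v) /\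
  reachable u v /\ j <= dist u v.

Lemma Inv_step j H : Inv j H -> Inv j.+1 (line_digraph H).
Proof.
move=> [B [F [A [u [v [Bc [Fc [Ac [[e [Fe he]] [[f [Af tf]] [[n w] dj]]]]]]]]]]].
exists (fun p : line_arc H => B (val p).1 /\ B (val p).2).
exists (fun p : line_arc H => F (val p).1 /\ F (val p).2).
exists (fun p : line_arc H => A (val p).1 /\ B (val p).2).
exists e, f.
split.
  move=> [[x y] /= hxy] [_ By].
  have [g [Bg tg]] := Bc _ By.
  have h : hd y == tl g by rewrite tg.
  by exists (exist _ (y, g) h : line_arc H).
split.
  move=> [[x y] /= hxy] [Fx Fy]; split; first by split; apply: (Fc _ _).1.
  have [_ [g [Fg hg]]] := Fc _ Fx.
  have h : hd g == tl x by rewrite hg.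
  by exists (exist _ (g, x) h : line_arc H).
split.
  by move=> [[x y] /= hxy] [Ax By]; have [Bx nFx] := Ac _ Ax; split => // -[].
split.
  have [_ [g [Fg hg]]] := Fc _ Fe.
  have h : hd g == tl e by rewrite hg.
  by exists (exist _ (g, e) h : line_arc H).
split.
  have [Bf _] := Ac _ Af.
  have [g [Bg tg]] := Bc _ Bf.
  have h : hd f == tl g by rewrite tg.
  by exists (exist _ (f, g) h : line_arc H).
have R : @reachable (line_digraph H) e f.
  by exists n.+1; apply: lift_walk; rewrite he tf.
split=> //.
have := dist_walk R; case: (@dist (line_digraph H) e f) => [|d] /=.
  move=> /eqP efe; subst f; by have [_ ] := Ac _ Af.
move=> /unlift_walk; rewrite he tf => /dist_le; exact: leq_trans.
Qed.

Lemma Inv_iter G : Inv 0 G -> forall k, Inv k (iter_line k G).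
Proof. by move=> I0; elim=> [|k IH] //=; apply: Inv_step. Qed.

Lemma Inv_diam j H : Inv j H -> j <= inner_diam H.
Proof.
move=> [B [F [A [u [v [_ [_ [_ [_ [_ [_ d]]]]]]]]]]].
exact: leq_trans d (diam_ge u v).
Qed.
Lemma shorten (G : digraph) (B : {set darc G}) x n y :
  walkn B n y x -> exists m, walkn [set e in B | tl e != x] m y x.
Proof.
elim: n y => [|n IH] y /=; first by move=> w; exists 0.
move=> /existsP [a /andP [aB /andP [/eqP ta w]]].
case: (eqVneq y x) => [yx|yx]; first by exists 0; rewrite /= yx.
have [m wm] := IH _ w; exists m.+1; apply/existsP; exists a.
by rewrite inE aB ta yx eqxx.
Qed.

Lemma Inv_init G (S : {set dvert G}) (B : {set darc G}) a b :
  is_subdigraph S B -> sub_strongly_connected S B ->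
  a \in B -> b \in B -> a != b -> tl a = tl b -> Inv 0 G.
Proof.
move=> sub sc aB bB ab tab.
set x := tl a.
set Bx := [set e in B | tl e != x].
have key : forall z n, walkn Bx n (hd b) z ->
    exists g, (g = b \/ (g \in Bx /\ exists n, walkn Bx n (hd b) (tl g))) /\ hd g = z.
  move=> z [|n] /=; first by move=> /eqP <-; exists b; split; [left|].
  move=> /walkn_last [g gB /andP [w /eqP hg]].
  by exists g; split => //; right; split => //; exists n.
have xS : x \in S by have /andP [] := sub a aB.
have hbS : hd b \in S by have /andP [] := sub b bB.
have [m wm] : exists m, walkn Bx m (hd b) x.
  by have [n w] := sc _ _ hbS xS; exact: shorten w.
exists (fun e => e \in B).
exists (fun e => e = b \/ (e \in Bx /\ exists n, walkn Bx n (hd b) (tl e))).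
exists (fun e => e = a).
exists (hd b), x.
split.
  move=> e eB; have /andP [te he] := sub e eB.
  have [[|n] /= w] := sc _ _ he te.
    by exists e; rewrite (eqP w).
  by move: w => /existsP [g /andP [gB /andP [/eqP tg _]]]; exists g.
split.
  move=> e [->|[eBx [n w]]].
    split => //; rewrite -tab; exact: key wm.
  by split; [move: eBx; rewrite inE => /andP [] | exact: key w].
split.
  move=> e ->; split => // -[abe|[]]; first by move: ab; rewrite abe eqxx.
  by rewrite inE eqxx andbF.
split; first by exists b; split => //; left.
split; first by exists a.
split => //; exists m; apply: walkn_mono wm; exact: subsetT.
Qed.
Lemma cycle_of_inj G (S : {set dvert G}) (B : {set darc G}) :
  is_subdigraph S B -> sub_strongly_connected S B -> B != set0 ->
  (forall a b, a \in B -> b \in B -> tl a = tl b -> a = b) ->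
  sub_is_cycle S B.
Proof.
move=> sub sc /set0Pn [e0 e0B] inj.
have out : forall y, y \in S -> exists2 c, c \in B & tl c == y.
  move=> y yS; have /andP [t0S _] := sub e0 e0B.
  have [[|n] /= w] := sc _ _ yS t0S; first by exists e0; rewrite // eq_sym.
  by move: w => /existsP [c /andP [cB /andP [tc _]]]; exists c.
pose c y := if [pick c in B | tl c == y] is Some c then c else e0.
have cP : forall y, y \in S -> c y \in B /\ tl (c y) = y.
  move=> y yS; rewrite /c; case: pickP => [z /andP [zB /eqP]|none] //.
  by have [z zB tz] := out y yS; move: (none z); rewrite zB tz.
pose nxt y := hd (c y).
have nS : forall y, y \in S -> nxt y \in S.
  by move=> y yS; have [cB _] := cP y yS; have /andP [] := sub _ cB.
pose x0 := tl e0.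
have x0S : x0 \in S by have /andP [] := sub e0 e0B.
pose xs i := iter i nxt x0.
have xsS : forall i, xs i \in S by elim=> [|i IH] //=; apply: nS.
have det : forall m y z, y \in S -> walkn B m y z -> z = iter m nxt y.
  elim=> [|m IH] y z yS /=; first by move/eqP.
  move=> /existsP [a /andP [aB /andP [/eqP ta w]]].
  have [cB tc] := cP y yS.
  have ac : a = c y by apply: inj => //; rewrite ta tc.
  rewrite -[nxt (iter m nxt y)]/(iter m.+1 nxt y) iterSr; apply: IH; last by rewrite /nxt -ac.
  by rewrite /nxt -ac; have /andP [] := sub a aB.
have exP : exists p, (0 < p) && (iter p nxt x0 == x0).
  have [k w0] := sc _ _ (nS _ x0S) x0S.
  by exists k.+1; apply/eqP; rewrite iterSr; exact: (esym (det _ _ _ (nS _ x0S) w0)).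
case: (ex_minnP exP) => -[|n] // /andP [_ /eqP hp] pmin.
have per : forall i, xs i = xs (i %% n.+1).
  move=> i; rewrite {1}(divn_eq i n.+1); elim: (i %/ n.+1) => [|q IH].
    by rewrite mul0n add0n.
  by rewrite mulSn -addnA /xs addnC iterD hp -/(xs _) -/(xs _) IH.
have xinj : forall i j, i < n.+1 -> j < n.+1 -> xs i = xs j -> i = j.
  suff H : forall i j, i < j -> j < n.+1 -> xs i = xs j -> False.
    move=> i j ilt jlt e; case: (ltngtP i j) => // ij.
    - by case: (H _ _ ij jlt e).
    - by case: (H _ _ ij ilt (esym e)).
  move=> i j ij jlt e.
  have : xs (n.+1 - j + i) = x0.
    by rewrite /xs iterD -/(xs i) e /xs -iterD subnK // ltnW.
  move=> /eqP h.
  have := pmin (n.+1 - j + i); rewrite h andbT.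
  have pos : 0 < n.+1 - j + i by rewrite addn_gt0 subn_gt0 jlt.
  move=> /(_ pos); rewrite -(leq_add2r j) addnAC subnK ?(ltnW jlt) //.
  by rewrite leq_add2l leqNgt ij.
exists n, (fun i => xs i), (fun i => c (xs i)).
split.
- by move=> i j /xinj e; apply: val_inj; apply: e.
- move=> i j e.
  have [_ ti] := cP _ (xsS i); have [_ tj] := cP _ (xsS j).
  apply: val_inj; apply: xinj; [exact: ltn_ord | exact: ltn_ord |]; change (xs i = xs j); by rewrite -ti -tj e.
- apply/setP => y; apply/idP/imsetP => [yS|[i _ ->]] //.
  have [m w] := sc _ _ x0S yS.
  exists (Ordinal (ltn_pmod m (ltn0Sn n))) => //=.
  by rewrite -per (det _ _ _ x0S w).
- apply/setP => a; apply/idP/imsetP => [aB|[i _ ->]]; last by case: (cP _ (xsS i)).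
  have /andP [taS _] := sub a aB.
  have [m w] := sc _ _ x0S taS.
  exists (Ordinal (ltn_pmod m (ltn0Sn n))) => //=.
  rewrite -per /xs -(det _ _ _ x0S w).
  have [cB tc] := cP _ taS; apply: inj => //.
- move=> i; have [_ tc] := cP _ (xsS i); split => //.
  rewrite inordK ?ltn_pmod // -per; by [].
Qed.

Theorem proposition3p1 (G : digraph) :
  ~ strongly_connected G ->
  (exists (S : {set dvert G}) (B : {set darc G}),
      [/\ is_subdigraph S B, sub_strongly_connected S B, B != set0
        & ~ sub_is_cycle S B]) ->
  forall M : nat, exists K : nat, forall k : nat, K <= k ->
    M <= inner_diam (iter_line k G).
Proof.
move=> _ [S [B [sub sc nB ncy]]] M.
have I0 : Inv 0 G.
  case: (boolP [exists a in B, exists b in B, (a != b) && (tl a == tl b)]).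
    move=> /existsP [a /andP [aB /existsP [b /andP [bB /andP [ab /eqP tab]]]]].
    exact: Inv_init sub sc aB bB ab tab.
  move=> /negP nex; exfalso; apply: ncy; apply: cycle_of_inj => // a b aB bB tab.
  apply/eqP; apply/negPn/negP => ab; apply: nex.
  apply/existsP; exists a; rewrite aB /=; apply/existsP; exists b.
  by rewrite bB ab tab eqxx.
exists M => k Mk; apply: leq_trans Mk _; apply: Inv_diam; exact: Inv_iter.
Qed.
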